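(* Let $P$ be a poset, let $\mathbf{JF}_P$ be the set of frame-generating join-specifications for $P$ and $\mathbf{JF}^+_P$ the set of maximal frame-generating join-specifications for $P$, both ordered by inclusion. (1) $\mathbf{JF}_P$ is a complete lattice (equivalently, as a thin category it is complete and cocomplete). Non-empty joins are given by unions, the top element is $\bigcup_{\mathcal{U}\in\mathbf{JF}_P}\mathcal{U}$ and the bottom element is $B_P$. (2) $\mathbf{JF}^+_P$ is a complete lattice (equivalently, complete and cocomplete). Non-empty meets are given by intersections, the top element is $\bigcup_{\mathcal{U}\in\mathbf{JF}_P}\mathcal{U}$ and the bottom element is $B_P^+$.
   Context: A join-specification for $P$ is a set $\mathcal{U}\subseteq\wp(P)$ such that $\bigvee S$ exists in $P$ for every $S\in\mathcal{U}$, and $\{p\}\in\mathcal{U}$ for every $p\in P$. A $\mathcal{U}$-ideal is a down-closed $C\subseteq P$ such that $\bigvee S\in C$ whenever $S\in\mathcal{U}$, $S\subseteq C$. $\mathcal{I}_{\mathcal{U}}$ is the complete lattice of $\mathcal{U}$-ideals ordered by inclusion; $\Gamma_{\mathcal{U}}(S)$ is the smallest $\mathcal{U}$-ideal containing $S$. $\mathcal{U}^+=\{S\subseteq P:\bigvee S\text{ exists and }\bigvee S\in\Gamma_{\mathcal{U}}(S)\}$; $\mathcal{U}$ is maximal if $\mathcal{U}=\mathcal{U}^+$; $\mathcal{U}$ is frame-generating if $\mathcal{I}_{\mathcal{U}}$ is a frame. $B_P$ is the set of all singleton subsets of $P$, and $B_P^+=(B_P)^+$. *)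

(* Defs.v *)
From HB Require Import structures.
From mathcomp Require Import all_boot all_order.
From mathcomp Require Import boolp classical_sets.
Set Implicit Arguments. Unset Strict Implicit. Unset Printing Implicit Defensive.
Import Order.TTheory.
Local Open Scope classical_set_scope.
Local Open Scope order_scope.

Section GenericOrder.
Variables (X : Type) (le : X -> X -> Prop) (D : set X).

Definition is_lub_in (F : set X) (x : X) : Prop :=
  D x /\ (forall y, F y -> le y x) /\
  (forall z, D z -> (forall y, F y -> le y z) -> le x z).

Definition is_glb_in (F : set X) (x : X) : Prop :=
  D x /\ (forall y, F y -> le x y) /\
  (forall z, D z -> (forall y, F y -> le z y) -> le z x).

Definition complete_lattice_in : Prop :=
  (forall F, F `<=` D -> exists x, is_lub_in F x) /\
  (forall F, F `<=` D -> exists x, is_glb_in F x).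

(* (D, le) is a frame: a complete lattice in which binary meets distribute
   over arbitrary joins:  a /\ (\/ F) = \/ { a /\ f | f in F }. *)
Definition frame_in : Prop :=
  complete_lattice_in /\
  (forall a F, D a -> F `<=` D ->
     forall j, is_lub_in F j ->
     forall m, is_glb_in [set y | y = a \/ y = j] m ->
     is_lub_in [set x | exists2 f, F f & is_glb_in [set y | y = a \/ y = f] x] m).

Definition is_top_in (x : X) : Prop := D x /\ forall y, D y -> le y x.
Definition is_bot_in (x : X) : Prop := D x /\ forall y, D y -> le x y.
End GenericOrder.

Section JoinSpec.
Context {disp : Order.disp_t} {P : porderType disp}.

Definition is_ub (S : set P) (x : P) : Prop := forall y, S y -> y <= x.
Definition is_join (S : set P) (x : P) : Prop :=
  is_ub S x /\ forall z, is_ub S z -> x <= z.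

Definition join_spec (U : set (set P)) : Prop :=
  (forall S, U S -> exists x, is_join S x) /\ (forall p : P, U [set p]).

Definition U_ideal (U : set (set P)) (C : set P) : Prop :=
  (forall x y : P, x <= y -> C y -> C x) /\
  (forall S, U S -> S `<=` C -> forall x, is_join S x -> C x).

Definition Gamma (U : set (set P)) (S : set P) : set P :=
  [set x | forall C, U_ideal U C -> S `<=` C -> C x].

Definition Uplus (U : set (set P)) : set (set P) :=
  [set S | exists x, is_join S x /\ Gamma U S x].

Definition maximal_js (U : set (set P)) : Prop := U = Uplus U.

Definition frame_generating (U : set (set P)) : Prop :=
  frame_in (fun A B : set P => A `<=` B) (U_ideal U).

Definition B_P : set (set P) := [set S | exists p : P, S = [set p]].
Definition B_P_plus : set (set P) := Uplus B_P.

Definition JF : set (set (set P)) := [set U | join_spec U /\ frame_generating U].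
Definition JFplus : set (set (set P)) := [set U | JF U /\ maximal_js U].
End JoinSpec.

(* Main.v *)
Require Import Defs.
From HB Require Import structures.
From mathcomp Require Import all_boot all_order.
From mathcomp Require Import boolp classical_sets.
Local Open Scope classical_set_scope.
Import Order.TTheory.

Section Generic.
Variables (X : Type) (le : X -> X -> Prop) (D : set X).

Lemma cl_from_bot b : is_bot_in le D b ->
  (forall F, F `<=` D -> F !=set0 -> exists x, is_lub_in le D F x) ->
  complete_lattice_in le D.
Proof.
move=> [Db bmin] H.
have lub : forall F, F `<=` D -> exists x, is_lub_in le D F x.
  move=> F FD; have [F0|F0] := pselect (F !=set0); first exact: H.
  exists b; split => //; split.
    by move=> y Fy; case: F0; exists y.
  by move=> z Dz _; exact: bmin.
split => // F FD.
have [l [Dl [lub1 lub2]]] :=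
  lub [set x | D x /\ forall y, F y -> le x y] (fun x (h : D x /\ _) => proj1 h).
exists l; split => //; split.
  move=> y Fy; apply: lub2; first exact: FD.
  by move=> x [_ Hx]; exact: Hx.
by move=> z Dz Hz; apply: lub1; split.
Qed.

Lemma cl_from_top t : is_top_in le D t ->
  (forall F, F `<=` D -> F !=set0 -> exists x, is_glb_in le D F x) ->
  complete_lattice_in le D.
Proof.
move=> [Dt tmax] H.
have glb : forall F, F `<=` D -> exists x, is_glb_in le D F x.
  move=> F FD; have [F0|F0] := pselect (F !=set0); first exact: H.
  exists t; split => //; split.
    by move=> y Fy; case: F0; exists y.
  by move=> z Dz _; exact: tmax.
split => // F FD.
have [l [Dl [glb1 glb2]]] :=
  glb [set x | D x /\ forall y, F y -> le y x] (fun x (h : D x /\ _) => proj1 h).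
exists l; split => //; split.
  move=> y Fy; apply: glb2; first exact: FD.
  by move=> x [_ Hx]; exact: Hx.
by move=> z Dz Hz; apply: glb1; split.
Qed.
End Generic.

Section Main.
Context {disp : Order.disp_t} {P : porderType disp}.
Local Open Scope order_scope.
Implicit Types (U V : set (set P)) (S C : set P).

Definition FG U := forall S, U S -> forall y, is_join S y -> forall x : P, x <= y ->
  Gamma U [set w | w <= x /\ exists2 s, S s & w <= s] x.

Lemma Gamma_ideal U S : U_ideal U (Gamma U S).
Proof.
split.
  by move=> x y xy Gy C CI SC; case: (CI) => dc _; apply: dc xy _; exact: Gy.
move=> T UT TG x jx C CI SC; case: (CI) => _ cl; apply: (cl T UT _ x jx).
by move=> t Tt; exact: TG t Tt C CI SC.
Qed.

Lemma Gamma_sub U S : S `<=` Gamma U S.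
Proof. by move=> x Sx C _ SC; exact: SC. Qed.

Lemma ideal_mono {U V C} : U `<=` V -> U_ideal V C -> U_ideal U C.
Proof. move=> UV [dc cl]; split => // T UT; exact: cl (UV _ UT). Qed.

Lemma Gamma_mono {U V S} : U `<=` V -> Gamma U S `<=` Gamma V S.
Proof. by move=> UV x Gx C CI SC; apply: Gx (ideal_mono UV CI) SC. Qed.

Lemma down_ideal U (z : P) : U_ideal U [set w | w <= z].
Proof.
split; first by move=> x y xy /= yz; exact: le_trans xy yz.
by move=> T _ Tz x [_ xl]; apply: xl => t Tt; exact: Tz.
Qed.

Lemma inter_ideal U A B : U_ideal U A -> U_ideal U B -> U_ideal U [set v | A v /\ B v].
Proof.
move=> [dA cA] [dB cB]; split.
  by move=> x y xy [Ay By]; split; [exact: dA xy Ay | exact: dB xy By].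
move=> T UT TAB x jx; split.
  by apply: (cA T UT _ x jx) => t /TAB [].
by apply: (cB T UT _ x jx) => t /TAB [].
Qed.

Lemma join_uniq {S x y} : is_join S x -> is_join S y -> x = y.
Proof.
move=> [ux lx] [uy ly]; apply/le_anti/andP; split; [exact: lx | exact: ly].
Qed.

Lemma frame_FG {U} : frame_generating U -> FG U.
Proof.
move=> [_ distr] S US y jy x xy.
set A := [set w | w <= x].
set F := [set f | exists2 s, S s & f = [set w | w <= s]].
set Dn := [set w | exists2 s, S s & w <= s].
have FI : F `<=` U_ideal U by move=> f [s _ ->]; exact: down_ideal.
have jl : is_lub_in (fun A B => A `<=` B) (U_ideal U) F (Gamma U Dn).
  split; first exact: Gamma_ideal.
  split.
    move=> f [s Ss ->] w ws; apply: Gamma_sub; by exists s.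
  move=> z zI zub w Gw; apply: (Gw z zI) => v [s Ss vs].
  by apply: (zub [set w | w <= s]) => //; exists s.
have yG : Gamma U Dn y.
  case: (Gamma_ideal U Dn) => _ cl; apply: (cl S US _ y jy).
  move=> s Ss; apply: Gamma_sub; exists s; [exact: Ss | exact: lexx].
have mg : is_glb_in (fun A B => A `<=` B) (U_ideal U)
           [set Y | Y = A \/ Y = Gamma U Dn] A.
  split; first exact: down_ideal.
  split; last by move=> z _ zlb; apply: zlb; left.
  move=> Y [->|->] w wA //.
  case: (Gamma_ideal U Dn) => dc _; exact: dc _ _ (le_trans wA xy) yG.
have [_ [_ least]] := distr A F (down_ideal U x) FI _ jl _ mg.
apply: (least _ (Gamma_ideal U _) _ x (lexx x)).
move=> g [f [s Ss ->] [_ [glb _]]] w gw.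
apply: Gamma_sub; split; first exact: (glb A (or_introl erefl)).
exists s => //; exact: (glb _ (or_intror erefl)).
Qed.

Lemma FG_frame {U} : FG U -> frame_generating U.
Proof.
move=> fg.
have cl : complete_lattice_in (fun A B : set P => A `<=` B) (U_ideal U).
  split=> F FI.
    exists (Gamma U [set x | exists2 f, F f & f x]); split; first exact: Gamma_ideal.
    split; first by move=> f Ff w fw; apply: Gamma_sub; exists f.
    move=> z zI zub w Gw; apply: (Gw z zI) => v [f Ff fv]; exact: zub f Ff v fv.
  exists [set x | forall f, F f -> f x]; split.
    split.
      move=> x y xy Hy f Ff; case: (FI f Ff) => dc _; exact: dc xy (Hy f Ff).
    move=> T UT TI x jx f Ff; case: (FI f Ff) => _ cl; apply: (cl T UT _ x jx).
    by move=> t Tt; exact: TI t Tt f Ff.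
  split; first by move=> f Ff w Hw; exact: Hw f Ff.
  by move=> z zI zlb w zw f Ff; exact: zlb f Ff w zw.
split => // a F aI FI j [jI [jub jl]] m [mI [mlb mg]].
split => //; split.
  move=> g [f Ff [gI [glb _]]].
  apply: mg => // Y [->|->]; first exact: glb (or_introl erefl).
  move=> w gw; exact: (jub f Ff w (glb f (or_intror erefl) w gw)).
move=> z zI zub.
have ma : m `<=` a := mlb a (or_introl erefl).
have mj : m `<=` j := mlb j (or_intror erefl).
case: (aI) => adc _.
have afz : forall f, F f -> forall w, a w -> f w -> z w.
  move=> f Ff w aw fw.
  apply: (zub [set v | a v /\ f v]); last by split.
  exists f => //; split; first exact: (inter_ideal _ _ _ aI (FI f Ff)).
  split; first by move=> Y [->|->] v [].
  by move=> z' _ zlb v zv; split; [exact: zlb a (or_introl erefl) v zv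
                                  | exact: zlb f (or_intror erefl) v zv].
set K := [set y | forall x, a x -> x <= y -> z x].
have KI : U_ideal U K.
  split.
    move=> x' y' xy' Ky x ax xx'; exact: Ky x ax (le_trans xx' xy').
  move=> T UT TK y jy x ax xy.
  apply: (fg T UT y jy x xy z zI) => w [wx [s Ts ws]].
  exact: TK s Ts w (adc _ _ wx ax) ws.
have jK : j `<=` K.
  apply: jl => // f Ff y fy x ax xy.
  case: (FI f Ff) => dc _; exact: afz f Ff x ax (dc _ _ xy fy).
move=> t mt; exact: (jK t (mj t mt) t (ma t mt) (lexx t)).
Qed.

Lemma sub_Uplus {U} : join_spec U -> U `<=` Uplus U.
Proof.
move=> [js _] S US; have [x jx] := js S US; exists x; split => //.
case: (Gamma_ideal U S) => _ cl; exact: cl S US (@Gamma_sub U S) x jx.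
Qed.

Lemma ideal_Uplus U : join_spec U -> U_ideal (Uplus U) = U_ideal U.
Proof.
move=> jsU; apply: funext => C; apply: propext; split.
  exact: ideal_mono (sub_Uplus jsU).
move=> [dc cl]; split => // S [x0 [jx0 Gx0]] SC x jx.
rewrite -(join_uniq jx0 jx); exact: Gx0 C (conj dc cl) SC.
Qed.

Lemma Gamma_Uplus {U} : join_spec U -> Gamma (Uplus U) = Gamma U.
Proof. by move=> js; rewrite /Gamma ideal_Uplus. Qed.

Lemma Uplus_idem {U} : join_spec U -> Uplus (Uplus U) = Uplus U.
Proof.
move=> js; apply/seteqP; split => S [x [jx Gx]]; exists x; split => //.
- by rewrite -(Gamma_Uplus js).
- by rewrite (Gamma_Uplus js).
Qed.

Lemma Uplus_mono {U V} : U `<=` V -> Uplus U `<=` Uplus V.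
Proof.
move=> UV S [x [jx Gx]]; exists x; split => //; exact: (Gamma_mono UV) x Gx.
Qed.

Lemma JF_Uplus U : JF U -> JF (Uplus U).
Proof.
move=> [js fr]; split; last by rewrite /frame_generating ideal_Uplus.
split; first by move=> S [x [jx _]]; exists x.
by move=> p; apply: sub_Uplus js _ (js.2 p).
Qed.

Lemma join1 (p : P) : is_join [set p] p.
Proof. split; [by move=> y ->; exact: lexx | by move=> z zu; exact: zu p erefl]. Qed.

Lemma JF_BP : JF (@B_P _ P).
Proof.
split.
  split; first by move=> S [p ->]; exists p; exact: join1.
  by move=> p; exists p.
apply: FG_frame => S [p ->] y jy x xy.
have yp : y <= p by case: jy => _ l; apply: l => w ->; exact: lexx.
apply: Gamma_sub; split; first exact: lexx.
exists p => //; exact: le_trans xy yp.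
Qed.

Lemma BP_bot U : JF U -> B_P `<=` U.
Proof. by move=> [[_ sg] _] S [p ->]; exact: sg p. Qed.

Lemma JF_union (F : set (set (set P))) :
  F `<=` JF -> F !=set0 -> JF (\bigcup_(U in F) U).
Proof.
move=> FJ [U0 FU0]; split.
  split; first by move=> S [U FU US]; case: (FJ U FU) => [[js _] _]; exact: js S US.
  by move=> p; exists U0 => //; case: (FJ U0 FU0) => [[_ sg] _]; exact: sg p.
apply: FG_frame => S [U FU US] y jy x xy.
have := frame_FG (FJ U FU).2 S US y jy x xy.
by apply: Gamma_mono => T UT; exists U.
Qed.

Lemma JFplus_inter (F : set (set (set P))) :
  F `<=` JFplus -> F !=set0 -> JFplus (\bigcap_(U in F) U).
Proof.
move=> FJ [U0 FU0].
set V := \bigcap_(U in F) U.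
have VU : forall U, F U -> V `<=` U by move=> U FU S VS; exact: VS U FU.
have jsV : join_spec V.
  split.
    by move=> S VS; case: (FJ U0 FU0) => [[[js _] _] _]; exact: js S (VS U0 FU0).
  by move=> p U FU; case: (FJ U FU) => [[[_ sg] _] _]; exact: sg p.
have max : forall S, Uplus V S -> V S.
  move=> S VpS U FU; case: (FJ U FU) => _ mx; rewrite mx.
  exact: (Uplus_mono (VU U FU)) S VpS.
split; last first.
  by rewrite /maximal_js; apply/seteqP; split; [exact: sub_Uplus | exact: max].
split => //; apply: FG_frame => S VS y jy x xy.
set Dx := [set w | w <= x /\ exists2 s, S s & w <= s].
have GU : forall U, F U -> Gamma U Dx x.
  move=> U FU; case: (FJ U FU) => [[_ fr] _].
  exact: (frame_FG fr) S (VU U FU S VS) y jy x xy.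
have jD : is_join Dx x.
  split; first by move=> w [].
  move=> z zu; exact: GU U0 FU0 _ (down_ideal U0 z) zu.
have VD : V Dx.
  move=> U FU; case: (FJ U FU) => _ mx; rewrite mx; exists x; split => //.
  exact: GU.
move=> C CI DC; case: CI => _ cl; exact: cl Dx VD DC x jD.
Qed.

End Main.

Theorem theorem5p5 (disp : Order.disp_t) (P : porderType disp) :
  let incl := fun U V : set (set P) => U `<=` V in
  (* (1) *)
  (complete_lattice_in incl (@JF _ P) /\
   (forall F : set (set (set P)), F `<=` JF -> F !=set0 ->
      is_lub_in incl JF F (\bigcup_(U in F) U)) /\
   is_top_in incl JF (\bigcup_(U in (@JF _ P)) U) /\
   is_bot_in incl JF (@B_P _ P)) /\
  (* (2) *)
  (complete_lattice_in incl (@JFplus _ P) /\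
   (forall F : set (set (set P)), F `<=` JFplus -> F !=set0 ->
      is_glb_in incl JFplus F (\bigcap_(U in F) U)) /\
   is_top_in incl JFplus (\bigcup_(U in (@JF _ P)) U) /\
   is_bot_in incl JFplus (@B_P_plus _ P)).
Proof.
move=> incl; rewrite /incl.
set W := \bigcup_(U in JF) U.
have JFne : (@JF _ P) !=set0 by exists B_P; exact: JF_BP.
have JFW : JF W := JF_union JF (fun x h => h) JFne.
have WUb : forall U, JF U -> U `<=` W by move=> U JU S US; exists U.
have botJF : is_bot_in (fun U V : set (set P) => U `<=` V) JF B_P.
  by split; [exact: JF_BP | exact: BP_bot].
have lubJF : forall F : set (set (set P)), F `<=` JF -> F !=set0 ->
    is_lub_in (fun U V : set (set P) => U `<=` V) JF F (\bigcup_(U in F) U).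
  move=> F FJ F0; split; first exact: JF_union.
  split; first by move=> U FU S US; exists U.
  by move=> Z JZ Zub S [U FU US]; exact: Zub U FU S US.
have JFpW : JFplus W.
  split => //; rewrite /maximal_js; apply/seteqP; split; first exact: sub_Uplus JFW.1.
  move=> S WpS; exists (Uplus W) => //; exact: JF_Uplus JFW.
have glbJFp : forall F : set (set (set P)), F `<=` JFplus -> F !=set0 ->
    is_glb_in (fun U V : set (set P) => U `<=` V) JFplus F (\bigcap_(U in F) U).
  move=> F FJ F0; split; first exact: JFplus_inter.
  split; first by move=> U FU S VS; exact: VS U FU.
  by move=> Z _ Zlb S ZS U FU; exact: Zlb U FU S ZS.
have topJFp : is_top_in (fun U V : set (set P) => U `<=` V) JFplus W.
  by split => // U [JU _]; exact: WUb.
have botJFp : is_bot_in (fun U V : set (set P) => U `<=` V) JFplus B_P_plus.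
  split.
    split; first exact: JF_Uplus JF_BP.
    rewrite /maximal_js /B_P_plus Uplus_idem; [done | exact: JF_BP.1].
  move=> U [JU mx]; rewrite mx; exact: Uplus_mono (BP_bot _ JU).
split.
  split; first exact: (@cl_from_bot _ _ _ _ botJF (fun F FJ F0 => ex_intro _ _ (lubJF F FJ F0))).
  split => //; split => //; split => //; exact: JFW.
split; first exact: (@cl_from_top _ _ _ _ topJFp (fun F FJ F0 => ex_intro _ _ (glbJFp F FJ F0))).
by split.
Qed.
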